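(* Let $\omega$ be a primitive substitution rule in $\mathbb{R}^d$ with finite local complexity whose expansion map is $Q=\lambda I$, where the expansion factor $\lambda$ is an irrational Pisot number. Let $\mathcal{T}$ be a tiling with $\omega(\mathcal{T})=\mathcal{T}$ (a fixed point of $\omega$), and assume $\mathcal{T}$ is repetitive. Then for every nonempty finite $\mathcal{T}$-legal patch $\mathcal{P}$ and every $v\in\mathbb{R}^d\setminus\{0\}$ there is $n_0\in\mathbb{N}$ such that the patch $\bigcup_{n=0}^{n_0}(\mathcal{P}+nv)$ is not $\mathcal{T}$-legal.
   Context: A tile in $\mathbb{R}^d$ is a compact set equal to the closure of its interior, possibly carrying a label from a fixed finite set; $T+x$ denotes the translate (same label). A patch is a set of tiles any two distinct members of which have disjoint interiors; its support is the closure of the union of the supports of its tiles; $\mathcal{P}+x=\{T+x: T\in\mathcal{P}\}$. A tiling is a patch whose support is $\mathbb{R}^d$. A patch $\mathcal{P}$ is $\mathcal{T}$-legal if $\mathcal{P}+x\subset\mathcal{T}$ for some $x\in\mathbb{R}^d$. $\mathcal{T}$ is repetitive if for every finite $\mathcal{T}$-legal patch $\mathcal{P}$ there is $R>0$ such that every ball of radius $R$ contains the support of some translate $\mathcal{P}+x\subset\mathcal{T}$. For a patch $\mathcal{P}$ and $S\subset\mathbb{R}^d$, $\mathcal{P}\sqcap S=\{T\in\mathcal{P}:\operatorname{supp}T\cap S\neq\emptyset\}$. A substitution rule consists of a finite set $\mathcal{A}$ of tiles (prototiles), a linear map $Q$ of $\mathbb{R}^d$ all of whose eigenvalues have modulus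 $>1$, and a map $\omega$ assigning to each $P\in\mathcal{A}$ a finite patch $\omega(P)$ of translates of elements of $\mathcal{A}$ with $\operatorname{supp}\omega(P)=Q(\operatorname{supp}P)$; it is extended by $\omega(P+x)=\omega(P)+Qx$ and to patches of translates of prototiles by taking unions. With $\mathcal{A}=\{T_1,\dots,T_m\}$, the substitution matrix has $(i,j)$ entry the number of translates of $T_i$ in $\omega(T_j)$; $\omega$ is primitive if some power of this matrix has all entries positive. $\omega$ has finite local complexity if for each compact $K$ the set $\{\omega^n(P)\sqcap(K+x): n>0, P\in\mathcal{A}, x\in\mathbb{R}^d\}$ is finite up to translation. A Pisot number is a real algebraic integer $>1$ all of whose other algebraic conjugates have modulus $<1$. *)

(* Defs.v *)
From HB Require Import structures.
From mathcomp Require Import all_boot all_order all_algebra.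
From mathcomp Require Import all_classical all_reals all_analysis.
From mathcomp.real_closed Require Import complex.
Set Implicit Arguments. Unset Strict Implicit. Unset Printing Implicit Defensive.
Import Order.TTheory GRing.Theory Num.Theory.
Import numFieldNormedType.Exports.
Local Open Scope classical_set_scope.
Local Open Scope ring_scope.

Section Tilings.
Variables (R : realType) (d : nat) (L : finType).
Local Notation V := 'rV[R]_d.

Record tile := Tile { supp : set V ; lab : L }.

Definition is_tile (t : tile) : Prop :=
  compact (supp t) /\ closure (interior (supp t)) = supp t.

Definition tr (t : tile) (x : V) : tile :=
  Tile [set y + x | y in supp t] (lab t).

Definition is_patch (P : set tile) : Prop :=
  (forall t, P t -> is_tile t) /\
  (forall t1 t2, P t1 -> P t2 -> t1 <> t2 ->
     interior (supp t1) `&` interior (supp t2) = set0).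

Definition psupp (P : set tile) : set V := closure (\bigcup_(t in P) supp t).

Definition ptr (P : set tile) (x : V) : set tile := [set tr t x | t in P].

Definition is_tiling (T : set tile) : Prop := is_patch T /\ psupp T = setT.

Definition legal (T P : set tile) : Prop := exists x : V, ptr P x `<=` T.

Definition eball (c : V) (r : R) : set V :=
  [set y | \sum_(i < d) ((y - c) ord0 i) ^+ 2 <= r ^+ 2].

Definition repetitive (T : set tile) : Prop :=
  forall P : set tile, finite_set P -> legal T P ->
  exists r : R, 0 < r /\
    forall c : V, exists x : V, ptr P x `<=` T /\ psupp (ptr P x) `<=` eball c r.

Definition pcap (P : set tile) (S : set V) : set tile :=
  [set t | P t /\ supp t `&` S !=set0].

(* Substitution data: prototiles proto : 'I_m -> tile, expansion Q = lam I,
   omega i = the finite patch omega(proto i), listed as translates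
   (j, y) standing for proto j + y. *)
Section Subst.
Variables (m : nat) (proto : 'I_m -> tile) (lam : R)
          (omega : 'I_m -> seq ('I_m * V)).

Definition omega_patch (i : 'I_m) : set tile :=
  [set t | exists2 p, p \in omega i & t = tr (proto p.1) p.2].

(* extension of omega to patches of translates of prototiles:
   omega(P + x) = omega(P) + Q x, and unions *)
Definition omegaP (P : set tile) : set tile :=
  [set t | exists i (x : V), P (tr (proto i) x) /\
             exists2 p, p \in omega i & t = tr (proto p.1) (lam *: x + p.2)].

Definition subst_matrix : 'M[int]_m :=
  \matrix_(i < m, j < m) (count (fun p : 'I_m * V => p.1 == i) (omega j))%:Z.

Definition primitive : Prop :=
  exists k : nat, forall i j, 0 < (subst_matrix ^+ k) i j.

Definition substitution_rule : Prop :=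
  (forall i, is_tile (proto i)) /\
  (forall i, uniq (omega i) /\
     forall p q, p \in omega i -> q \in omega i -> p != q ->
       interior (supp (tr (proto p.1) p.2)) `&`
       interior (supp (tr (proto q.1) q.2)) = set0) /\
  (forall i, psupp (omega_patch i) = [set lam *: y | y in supp (proto i)]) /\
  (* the extension omega(P + x) = omega(P) + Qx is well defined *)
  (forall i j (x y : V), tr (proto i) x = tr (proto j) y ->
     ptr (omega_patch i) (lam *: x) = ptr (omega_patch j) (lam *: y)).

Definition FLC : Prop :=
  forall K : set V, compact K ->
  exists s : seq (set tile),
    forall (n : nat) (i : 'I_m) (x : V), (0 < n)%N ->
      exists2 Q, Q \in s &
        exists y : V, pcap (iter n omegaP [set proto i]) [set k + x | k in K] = ptr Q y.
End Subst.
End Tilings.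

Definition pisot (R : realType) (lam : R) : Prop :=
  1 < lam /\
  exists p : {poly int},
    p \is monic /\ irreducible_poly (map_poly intr p : {poly rat}) /\
    root (map_poly intr p) lam /\
    forall z : R[i], root (map_poly intr p) z -> z != (lam%:C)%C -> `|z| < 1.

(* Main.v *)
Require Import Defs.
From HB Require Import structures.
From mathcomp Require Import all_boot all_order all_algebra all_field.
From mathcomp Require Import all_classical all_reals all_analysis.
From mathcomp.real_closed Require Import complex.
Import Order.TTheory GRing.Theory Num.Theory.
Import numFieldNormedType.Exports.
Local Open Scope classical_set_scope.
Local Open Scope ring_scope.

Module PartA.
Local Open Scope classical_set_scope.
Local Open Scope ring_scope.
Section Final.
Variables (R : realType) (d : nat) (K : fieldType) (iota : {rmorphism K -> R})
  (sg : K -> R[i]).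
Hypotheses (sgB : {morph sg : x y / x - y}) (sgM : {morph sg : x y / x * y})
  (sg1 : sg 1 = 1).

Lemma sg0 : sg 0 = 0.
Proof. by rewrite -(subrr 1) sgB subrr. Qed.

Lemma sgD x y : sg (x + y) = sg x + sg y.
Proof.
have -> : x + y = x - (0 - y) by rewrite sub0r opprK.
by rewrite !sgB sg0 sub0r opprK.
Qed.

Lemma sgn n : sg n%:R = n%:R.
Proof. by elim: n => [|n IH]; rewrite ?sg0 // !mulrS sgD sg1 IH. Qed.

Lemma sg_eq0 x : sg x = 0 -> x = 0.
Proof.
move=> h; apply/eqP; apply/negP => /negP nx.
have : sg (x * x^-1) = 1 by rewrite mulfV // sg1.
by rewrite sgM h mul0r => /eqP; rewrite eq_sym oner_eq0.
Qed.

Lemma arch_C (z B : R[i]) : (forall N : nat, N%:R * `|z| <= B) -> z = 0.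
Proof.
move=> h; have B0 : 0 <= B by have := h 0%N; rewrite mul0r.
have hB : B = (complex.Re B)%:C%C.
  move: B0; rewrite lecE /= => /andP[/eqP hI _]; by apply/eqP; rewrite eq_complex /= hI !eqxx.
have [a a0 ha] : exists2 a : R, 0 <= a & `|z| = a%:C%C.
  by exists (Num.sqrt ((complex.Re z)^+2 + (complex.Im z)^+2)); rewrite ?sqrtr_ge0 // normc_def.
have hN N : (N%:R * a <= complex.Re B).
  have := h N; rewrite ha hB -lecR; congr (_ <= _).
  by rewrite rmorphM rmorph_nat.
have a_eq0 : a = 0.
  apply/eqP; rewrite eq_le a0 andbT; apply/negP => /negP; rewrite -ltNge => apos.
  have RB0 : 0 <= complex.Re B / a.
    apply: divr_ge0; last exact: ltW.
    by move: B0; rewrite lecE => /andP[].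
  have := archi_boundP RB0; set N := Num.Def.archi_bound _ => hlt.
  have := hN N; rewrite -ler_pdivlMr // => hle.
  by move: (lt_le_trans hlt hle); rewrite ltxx.
by apply/eqP; rewrite -normr_eq0 ha a_eq0.
Qed.

Lemma final n : forall (r : 'I_n -> 'rV[R]_d) (c : nat -> 'I_n -> K)
  (w : 'rV[R]_d) (B : R[i]),
  (forall N : nat, N%:R *: w = \sum_i iota (c N i) *: r i) ->
  (forall N i, `|sg (c N i)| <= B) -> w = 0.
Proof.
elim: n => [|n IH] r c w B hw hB.
  by have := hw 1%N; rewrite scale1r big_ord0.
case: (pselect (forall a : 'I_n.+1 -> K,
   \sum_i iota (a i) *: r i = 0 -> forall i, a i = 0)) => [indep|dep].
  have e N i : c N i = N%:R * c 1%N i.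
    apply/eqP; rewrite -subr_eq0; apply/eqP.
    apply: (indep (fun i => c N i - N%:R * c 1%N i)).
    under eq_bigr do rewrite rmorphB rmorphM rmorph_nat scalerBl -scalerA.
    by rewrite sumrB -scaler_sumr -hw -hw scale1r subrr.
  have c1 i : c 1%N i = 0.
    apply: sg_eq0; apply: (@arch_C _ B) => N.
    by rewrite -normr_nat -normrM -sgn -sgM -e.
  have := hw 1%N; rewrite scale1r => ->; apply: big1 => i _.
  by rewrite c1 rmorph0 scale0r.
move/existsNP: dep => [a /not_implyP [hsum /existsNP [i0 ai0]]].
have ai0' : iota (a i0) != 0 by rewrite fmorph_eq0; apply/eqP.
pose b j := a (lift i0 j) / a i0.
have hrel : \sum_j iota (b j) *: r (lift i0 j) = - r i0.
  move: hsum; rewrite (bigD1_ord i0) //= => /eqP; rewrite addrC addr_eq0 => /eqP h.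
  under eq_bigr do rewrite rmorphM fmorphV mulrC -scalerA.
  by rewrite -scaler_sumr h scalerN scalerA mulVf // scale1r.
apply: (IH (fun j => r (lift i0 j)) (fun N j => c N (lift i0 j) - c N i0 * b j)
  w (B + B * \sum_j `|sg (b j)|)).
  move=> N; rewrite hw (bigD1_ord i0) //=.
  under [RHS]eq_bigr do rewrite rmorphB rmorphM scalerBl -scalerA.
  by rewrite sumrB -scaler_sumr hrel scalerN opprK addrC.
move=> N j; rewrite sgB sgM; apply: le_trans (ler_normB _ _) _.
apply: lerD => //; rewrite normrM; apply: ler_pM => //.
rewrite (bigD1 j) //= lerDl; exact: sumr_ge0.
Qed.
End Final.

End PartA.
Import PartA.

Module PartB.
Local Open Scope classical_set_scope.
Local Open Scope ring_scope.
Local Open Scope complex_scope.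
Local Open Scope ring_scope.

Section Alg.
Variables (R : realType) (lam : R) (pQ : {poly rat}).
Hypotheses (irr : irreducible_poly pQ) (rootR : root (map_poly ratr pQ) lam)
  (irrat : ~ rational lam).

Let nzp : pQ != 0. Proof. exact: irredp_neq0. Qed.

Lemma minp q : root (map_poly ratr q) lam -> q != 0 -> (size pQ <= size q)%N.
Proof. exact: (proj2 (subfx_irreducibleP rootR nzp) irr). Qed.

Lemma dvdQ q : root (map_poly ratr q) lam -> pQ %| q.
Proof.
move=> hq; apply/modp_eq0P; apply/eqP; apply/negPn/negP => nz.
have : (size pQ <= size (q %% pQ)%R)%N.
  apply: minp => //.
  have -> : q %% pQ = q - (q %/ pQ) * pQ by rewrite {2}(divp_eq q pQ) addrC addKr.
  by rewrite rmorphB rmorphM /= rootE hornerD hornerN hornerM (rootP hq) (rootP rootR) mulr0 subrr.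
by rewrite leqNgt ltn_modp nzp.
Qed.

Lemma conj_root q (mu : R[i]) : root (map_poly ratr pQ) mu ->
  root (map_poly ratr q) lam -> root (map_poly ratr q) mu.
Proof. by move=> hmu /dvdQ /dvdpP [r ->]; rewrite rmorphM rootM hmu orbT. Qed.

Lemma mapC (q : {poly rat}) :
  map_poly (ratr : rat -> R[i]) q = map_poly (real_complex R) (map_poly ratr q).
Proof.
rewrite -map_poly_comp; apply: eq_map_poly => a /=.
by rewrite fmorph_rat.
Qed.

Lemma rootC (q : {poly rat}) :
  root (map_poly (ratr : rat -> R[i]) q) (lam%:C) = root (map_poly ratr q) lam.
Proof.
rewrite mapC !rootE horner_map /=.
by apply/eqP/eqP => [[]|->].
Qed.

Lemma exists_conj : exists mu : R[i], root (map_poly ratr pQ) mu /\ mu != lam%:C.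
Proof.
have hC : root (map_poly (ratr : rat -> R[i]) pQ) (lam%:C) by rewrite rootC.
have [q hq] := factor_theorem _ _ hC.
have [/closed_rootP [z hz]|] := boolP (size q != 1%N).
  have rz : root (map_poly (ratr : rat -> R[i]) pQ) z by rewrite hq rootM hz.
  have [ez|nz] := eqVneq z (lam%:C); last by exists z.
  exfalso; rewrite ez in hz.
  have [q2 hq2] := factor_theorem _ _ hz.
  have hd : root (map_poly (ratr : rat -> R[i]) pQ^`()) (lam%:C).
    rewrite -deriv_map hq hq2 !derivM derivXsubC rootE !hornerE subrr.
    by rewrite !mulr0 !addr0.
  move: hd; rewrite rootC => /dvdQ hdv.
  have sz : (1 < size pQ)%N.
    by rewrite -(size_map_poly (ratr : {rmorphism rat -> R})) (root_size_gt1 _ rootR) // map_poly_eq0.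
  have nzd : pQ^`() != 0.
    apply/eqP => /(congr1 (fun r : {poly rat} => r`_(size pQ).-2)).
    rewrite coef_deriv coef0.
    have e : ((size pQ).-2.+1 = (size pQ).-1)%N by case: (size pQ) sz => [|[|k]].
    rewrite e => /eqP; rewrite mulrn_eq0 -lead_coefE lead_coef_eq0 (negPf nzp) orbF.
    by case: (size pQ) sz => [|[|k]].
  by have := dvdp_leq nzd hdv; rewrite leqNgt lt_size_deriv.
rewrite negbK => /eqP sq; exfalso; apply: irrat.
have s2 : size pQ = 2%N.
  have q0 : q != 0 by apply/eqP => q0; move: sq; rewrite q0 size_poly0.
  rewrite -(size_map_poly (ratr : {rmorphism rat -> R[i]})) hq.
  by rewrite size_mul // ?polyXsubC_eq0 // sq size_XsubC.
have := rootR; rewrite rootE horner_coef size_map_poly s2 !big_ord_recr big_ord0 /=.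
rewrite add0r expr0 mulr1 expr1 !coef_map /= => /eqP h.
have a0 : pQ`_1 != 0.
  have := lead_coef_eq0 pQ; rewrite lead_coefE s2 /= => ->; exact: nzp.
exists (- pQ`_0 / pQ`_1) => //.
have nz1 : ratr pQ`_1 != 0 :> R by rewrite fmorph_eq0.
rewrite rmorphM rmorphN fmorphV /= mulrC mulrN -mulNr.
apply: (mulfI nz1); rewrite mulNr mulrN mulrA mulfV // mul1r.
by apply/eqP; rewrite eq_sym -addr_eq0 addrC h.
Qed.

Definition Kf := subFExtend (ratr : {rmorphism rat -> R}) lam pQ.
Variable mu : R[i].
Hypothesis hmu : root (map_poly ratr pQ) mu.
Definition sg (x : Kf) : R[i] := (map_poly ratr (sval (cid (subfxE x)))).[mu].

Lemma sgE q : sg (subfx_eval _ lam pQ q) = (map_poly ratr q).[mu].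
Proof.
rewrite /sg; set q' := sval _.
have e : subfx_eval _ lam pQ q = subfx_eval _ lam pQ q' := svalP (cid (subfxE _)).
have : root (map_poly ratr (q - q')) lam.
  by rewrite rmorphB rootE hornerD hornerN -!(subfx_inj_eval rootR nzp) e subrr.
move/(fun h => conj_root _ _ hmu h); rewrite rmorphB rootE hornerD hornerN subr_eq0 => /eqP.
by [].
Qed.

Lemma sgB : {morph sg : x y / x - y}.
Proof.
move=> x y; case: (subfxE x) => qx ->; case: (subfxE y) => qy ->.
by rewrite -rmorphB !sgE rmorphB hornerD hornerN.
Qed.

Lemma sgM : {morph sg : x y / x * y}.
Proof.
move=> x y; case: (subfxE x) => qx ->; case: (subfxE y) => qy ->.
by rewrite -rmorphM !sgE rmorphM hornerM.
Qed.

Lemma sg1 : sg 1 = 1.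
Proof. by rewrite -(rmorph1 (subfx_eval _ lam pQ)) sgE rmorph1 hornerC. Qed.

Lemma sg_root : sg (subfx_root _ lam pQ) = mu.
Proof. by rewrite /subfx_root sgE map_polyX hornerX. Qed.

Lemma iota_root : subfx_inj (subfx_root _ lam pQ : Kf) = lam.
Proof. exact: subfx_inj_root. Qed.
End Alg.

Lemma alg_setup (R : realType) (lam : R) : pisot lam -> irrational lam ->
  exists (K : fieldType) (iota : {rmorphism K -> R}) (sg : K -> R[i]) (lh : K) (mu : R[i]),
  [/\ {morph sg : x y / x - y}, {morph sg : x y / x * y}, sg 1 = 1, iota lh = lam
   & sg lh = mu] /\ `|mu| < 1.
Proof.
move=> [lam1 [p [mp [irr [rt hz]]]]] irrat.
pose pQ : {poly rat} := map_poly intr p.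
have e (F : numFieldType) : map_poly (ratr : rat -> F) pQ = map_poly intr p.
  rewrite /pQ -map_poly_comp; apply: eq_map_poly => a /=; exact: ratr_int.
have rootR : root (map_poly ratr pQ) lam by rewrite e.
have [mu [hmu nmu]] := @exists_conj R lam pQ irr rootR irrat.
exists (@Kf R lam pQ), subfx_inj, (@sg R lam pQ mu), (subfx_root _ lam pQ), mu.
split; last by apply: hz => //; rewrite -e.
split.
- by apply: sgB.
- by apply: sgM.
- by apply: sg1.
- by apply: iota_root.
- by apply: sg_root.
Qed.

End PartB.
Import PartB.

Module PartC.
Local Open Scope classical_set_scope.
Local Open Scope ring_scope.

Lemma arch_R (R : realType) (x B : R) : 0 <= x -> (forall N : nat, N%:R * x <= B) -> x = 0.
Proof.
move=> x0 h; apply/eqP; rewrite eq_le x0 andbT; apply/negP => /negP; rewrite -ltNge => apos.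
have B0 : 0 <= B by have := h 0%N; rewrite mul0r.
have RB0 : 0 <= B / x by rewrite divr_ge0 // ltW.
have := archi_boundP RB0; set N := Num.Def.archi_bound _ => hlt.
have := h N; rewrite -ler_pdivlMr // => hle.
by move: (lt_le_trans hlt hle); rewrite ltxx.
Qed.

Section Geo1.
Variables (R : realType) (d : nat) (L : finType).
Local Notation V := 'rV[R]_d.
Local Notation tile := (tile R d L).

Lemma trK (t : tile) (a b : V) : tr (tr t a) b = tr t (a + b).
Proof.
rewrite /tr /=; congr Tile; apply/seteqP; split => y /=.
  by case=> z [w hw <-] <-; exists w => //; rewrite addrA.
by case=> w hw <-; exists (w + a); [exists w | rewrite addrA].
Qed.

Lemma tr0 (t : tile) : tr t 0 = t.
Proof.
case: t => s l; rewrite /tr /=; congr Tile; apply/seteqP; split => y /=.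
  by case=> z hz <-; rewrite addr0.
by move=> hy; exists y => //; rewrite addr0.
Qed.

Lemma entry_le (x : V) k : `|x ord0 k| <= `|x|.
Proof.
have -> : `|x| = mx_norm x by [].
rewrite mx_normrE; apply/bigmax_geP; right => /=.
by exists (ord0, k).
Qed.

Lemma shift_uniq (A : set V) (a b : V) : compact A -> A !=set0 ->
  [set y + a | y in A] = [set y + b | y in A] -> a = b.
Proof.
move=> cA [y0 Ay0] e.
have step y : A y -> A (y + (a - b)).
  move=> Ay; have : [set y + b | y in A] (y + a) by rewrite -e; exists y.
  case=> z Az hz; suff -> : y + (a - b) = z by [].
  by rewrite addrA -hz addrK.
have it n : A (y0 + (a - b) *+ n).
  elim: n => [|n IH]; first by rewrite mulr0n addr0.
  by rewrite mulrS addrC addrA; have := step _ IH; rewrite addrC.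
have [M [_ hM]] := compact_bounded cA.
have hb y : A y -> `|y| <= M + 1 by move=> Ay; apply: hM => //; rewrite ltrDl.
apply/eqP; rewrite -subr_eq0 -normr_eq0; apply/eqP.
apply: (@arch_R _ _ ((M + 1) + (M + 1))) => // N.
rewrite mulr_natl -normrMn.
have -> : (a - b) *+ N = (y0 + (a - b) *+ N) - y0 by rewrite addrAC subrr add0r.
apply: le_trans (ler_normB _ _) _.
by apply: lerD; apply: hb.
Qed.

Lemma tile_uniq (i j : tile) (x y x' y' : V) : compact (supp i) -> supp i !=set0 ->
  tr i x = tr j y -> tr i x' = tr j y' -> x - y = x' - y'.
Proof.
move=> ci ni h1 h2.
have e1 : tr i (x - y) = j by rewrite -trK h1 trK subrr tr0.
have e2 : tr i (x' - y') = j by rewrite -trK h2 trK subrr tr0.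
have := congr1 (@supp R d L) (etrans e1 (esym e2)); rewrite /tr /=.
exact: shift_uniq.
Qed.

End Geo1.

End PartC.
Import PartC.

Module PartD.
Local Open Scope classical_set_scope.
Local Open Scope ring_scope.

Section Geo2.
Variables (R : realType) (d : nat) (L : finType) (m : nat)
  (proto : 'I_m -> tile R d L) (lam : R) (omega : 'I_m -> seq ('I_m * 'rV[R]_d))
  (T : set (tile R d L)).
Local Notation V := 'rV[R]_d.
Hypotheses (Hsub : substitution_rule proto lam omega) (Hprim : primitive omega)
  (Htil : is_tiling T) (Htr : forall t, T t -> exists i (x : V), t = tr (proto i) x).

Let S i := supp (proto i) = set0.

Lemma empty_closed i p : S i -> p \in omega i -> S p.1.
Proof.
move=> hi hp; have [_ [_ [hs _]]] := Hsub.
have e := hs i; rewrite hi image_set0 in e.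
apply/seteqP; split => // y hy.
have : psupp (omega_patch proto omega i) (y + p.2).
  apply: subset_closure; exists (tr (proto p.1) p.2); first by exists p.
  by exists y.
by rewrite e.
Qed.

Lemma M0 i j : S i -> ~ S j -> subst_matrix omega j i = 0.
Proof.
move=> hi hj; rewrite mxE; congr Posz; apply/eqP; rewrite -leqn0 leqNgt -has_count.
apply/hasP => -[p hp /eqP hpj]; apply: hj; rewrite -hpj.
exact: empty_closed hp.
Qed.

Lemma Mk k i j : S i -> ~ S j -> (subst_matrix omega ^+ k) j i = 0.
Proof.
elim: k i j => [|k IH] i j hi hj.
  rewrite expr0 mxE; case: eqP => // hji; by rewrite hji in hj.
rewrite exprSr mxE; apply: big1 => l _.
case: (pselect (S l)) => hl; first by rewrite (IH l) // mul0r.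
by rewrite M0 // mulr0.
Qed.

Lemma proto_ne i : supp (proto i) !=set0.
Proof.
apply: contrapT => hne.
have hi : S i by apply/seteqP; split => // y hy; apply: hne; exists y.
have [k hk] := Hprim.
have allS j : S j.
  apply: contrapT => hj; have := hk j i; by rewrite Mk // ltxx.
have [_ hT] := Htil.
have : psupp T = set0.
  rewrite /psupp; suff -> : \bigcup_(t in T) supp t = set0 by rewrite closure0.
  apply/seteqP; split => // y [t Tt ht].
  have [j [x ex]] := Htr _ Tt; move: ht; rewrite ex /= allS.
  by case.
rewrite hT => /seteqP [/(_ 0) h _].
by have := h I.
Qed.

Lemma ballE (x y : V) e : ball x e y <-> `|x - y| < e.
Proof. by rewrite -ball_normE. Qed.

Lemma shift_nbhs (A : set V) (c x : V) eps : ball c eps `<=` A ->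
  ball (c + x) eps `<=` [set y + x | y in A].
Proof.
move=> hb w /ballE hw; exists (w - x); last by rewrite subrK.
apply: hb; apply/ballE; by rewrite opprB addrA.
Qed.

Lemma locfin i r : exists s : seq V,
  forall x, T (tr (proto i) x) -> `|x| <= r -> x \in s.
Proof.
have [ti _] := Hsub; have [ci cl] := ti i.
set A := supp (proto i) in ci cl.
have [z hz] := proto_ne i.
have [c hc] : interior A !=set0.
  apply: contrapT => h.
  have ie : interior A = set0 by apply/seteqP; split => // y hy; apply: h; exists y.
  by move: hz; rewrite -/A -cl ie closure0.
have [eps eps0 hball] := (nbhs_ballP c A).1 hc.
have [[_ hdisj] _] := Htil.
have sep x x' : T (tr (proto i) x) -> T (tr (proto i) x') -> `|x - x'| < eps -> x = x'.
  move=> Tx Tx' hxx'; apply: contrapT => nx.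
  have ntile : tr (proto i) x <> tr (proto i) x'.
    move=> e; apply: nx; apply/eqP; rewrite -subr_eq0; apply/eqP.
    by rewrite (@tile_uniq R d L _ _ _ _ x' x' ci (proto_ne i) e (erefl _)) subrr.
  have := hdisj _ _ Tx Tx' ntile; rewrite /= => /seteqP [/(_ (c + x')) h _].
  apply: h; split.
    apply: (@filterS _ _ _ (ball (c + x) eps)); first exact: shift_nbhs.
    apply: open_nbhs_nbhs; split; first exact: ball_open.
    by apply/ballE; rewrite opprD addrACA subrr add0r.
  apply/nbhs_ballP; exists eps => //; exact: shift_nbhs.
set Cb := [set v : V | forall k, `[-r, r]%classic (v ord0 k)].
have cC : compact Cb by apply: (@rV_compact _ _ (fun=> `[-r, r]%classic)) => _; exact: segment_compact.
rewrite compact_cover in cC.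
have e2 : 0 < eps / 2 by rewrite divr_gt0.
have hcov : Cb `<=` cover setT (fun c0 : V => ball c0 (eps / 2)).
  by move=> x _; exists x => //; exact: ballxx.
have [D' _ hD'] := cC V setT (fun c0 => ball c0 (eps / 2)) (fun c0 _ => ball_open c0 (eps/2)) hcov.
exists [seq xget 0 [set x | T (tr (proto i) x) /\ ball c0 (eps / 2) x] | c0 <- finmap.enum_fset D'].
move=> x Tx nx.
have Cx : Cb x.
  move=> k /=; rewrite in_itv /= -ler_norml; exact: le_trans (@entry_le R d x k) nx.
have [c0 Dc0 bc0] := hD' x Cx.
apply/mapP; exists c0 => //.
case: xgetP => [x' hx' [Tx' bx']|/(_ x) []//].
apply: sep => //; move/ballE: bc0 => bc0; move/ballE: bx' => bx'.
have -> : x - x' = (c0 - x') - (c0 - x) by rewrite opprB [RHS]addrC addrA subrK.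
apply: le_lt_trans (ler_normB _ _) _.
by rewrite (splitr eps) ltrD.
Qed.

End Geo2.

End PartD.
Import PartD.

Module PartE.
Local Open Scope classical_set_scope.
Local Open Scope ring_scope.

Section Geo3.
Variables (R : realType) (d : nat) (L : finType) (m : nat)
  (proto : 'I_m -> tile R d L) (lam : R) (omega : 'I_m -> seq ('I_m * 'rV[R]_d))
  (T : set (tile R d L)).
Local Notation V := 'rV[R]_d.
Hypotheses (Hsub : substitution_rule proto lam omega) (Hprim : primitive omega)
  (Htil : is_tiling T) (Htr : forall t, T t -> exists i (x : V), t = tr (proto i) x)
  (Hfix : omegaP proto lam omega T = T) (lam1 : 1 < lam).
Variables (K : fieldType) (iota : {rmorphism K -> R}) (sg : K -> R[i]) (lh : K) (mu : R[i]).
Hypotheses (sgB : {morph sg : x y / x - y}) (sgM : {morph sg : x y / x * y})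
  (sg1 : sg 1 = 1) (ilh : iota lh = lam) (slh : sg lh = mu) (mu1 : `|mu| < 1).

Let pne := @proto_ne R d L m proto lam omega T Hsub Hprim Htil Htr.
Let sgD' := @sgD R K sg sgB.
Let sg0' := @sg0 R K sg sgB.

Definition dl (j l : 'I_m) : V :=
  xget 0 [set e : V | exists a b, tr (proto j) a = tr (proto l) b /\ e = a - b].

Lemma dlP j l a b : tr (proto j) a = tr (proto l) b -> a - b = dl j l.
Proof.
move=> h; rewrite /dl; case: xgetP => [e _ [a' [b' [h' ->]]]|/(_ (a - b)) []]; last first.
  by exists a, b.
have [ti _] := Hsub; have [ci _] := ti j.
exact: (@tile_uniq R d L _ _ _ _ _ _ ci (pne j) h h').
Qed.

Definition Dset : seq V := [seq p.2 + dl j p.1 | j <- enum 'I_m,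
  p <- flatten [seq omega i | i <- enum 'I_m]].
Definition Eset : seq V := [seq dl j l | j <- enum 'I_m, l <- enum 'I_m].

Lemma desub j y : T (tr (proto j) y) -> exists i (x : V), T (tr (proto i) x) /\
  exists2 e, e \in Dset & y = lam *: x + e.
Proof.
move=> Ty; have : omegaP proto lam omega T (tr (proto j) y) by rewrite Hfix.
move=> -[i [x [Tx [p hp ep]]]].
exists i, x; split => //; exists (p.2 + dl j p.1).
  apply: (allpairs_f (fun j (p : 'I_m * V) => p.2 + dl j p.1)); first by rewrite mem_enum.
  by apply/flattenP; exists (omega i) => //; apply: map_f; rewrite mem_enum.
have := @dlP j p.1 y (lam *: x + p.2) ep => <-.
by rewrite addrA addrC subrK.
Qed.

Lemma le_sum_seq (s : seq V) e : e \in s -> `|e| <= \sum_(x <- s) `|x|.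
Proof.
elim: s => [//|a s IH]; rewrite in_cons big_cons => /orP [/eqP ->|/IH h].
  by rewrite lerDl sumr_ge0.
by apply: le_trans h _; rewrite lerDr.
Qed.

Definition Cc := \sum_(e <- Dset) `|e|.
Definition R0 := (Cc + 1) / (lam - 1).

Lemma fs_ex : exists fs : 'I_m -> seq V, forall i x, T (tr (proto i) x) -> `|x| <= R0 ->
  x \in fs i.
Proof.
have := fun i => @locfin R d L m proto lam omega T Hsub Hprim Htil Htr i R0.
by move/choice => [fs hfs]; exists fs.
Qed.

Variable fs : 'I_m -> seq V.
Hypothesis hfs : forall i x, T (tr (proto i) x) -> `|x| <= R0 -> x \in fs i.

Definition G : seq V := Dset ++ flatten [seq fs i | i <- enum 'I_m] ++ Eset.
Local Notation n := (size G).

Definition beta : R[i] := (1 - `|mu|)^-1.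

Lemma beta_ge1 : 1 <= beta.
Proof.
have h0 : 0 < 1 - `|mu| by rewrite subr_gt0.
have h1 : 1 - `|mu| != 0 by rewrite gt_eqF.
by rewrite /beta -(ler_pM2r h0) mulVf // mul1r gerBl normr_ge0.
Qed.

Lemma beta_eq : `|mu| * beta + 1 = beta.
Proof.
have h0 : 1 - `|mu| != 0 by rewrite subr_eq0 eq_sym lt_eqF.
by rewrite /beta; apply: (mulIf h0); rewrite mulrDl -mulrA mulVf // mulr1 mul1r addrC subrK.
Qed.

Definition Rep (b : R[i]) (y : V) := exists c : 'I_n -> K,
  y = \sum_g iota (c g) *: G`_g /\ forall g, `|sg (c g)| <= b.

Lemma indic e : e \in G -> Rep 1 e.
Proof.
move=> he; have hi : (index e G < n)%N by rewrite index_mem.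
pose i0 : 'I_n := Ordinal hi.
exists (fun g => if g == i0 then 1 else 0); split.
  rewrite (bigD1 i0) //= eqxx rmorph1 scale1r big1 ?addr0; first by rewrite nth_index.
  by move=> g /negPf ->; rewrite rmorph0 scale0r.
by move=> g; case: eqP => _; rewrite ?sg1 ?sg0' ?normr1 ?normr0.
Qed.

Lemma Rep_mono b b' y : b <= b' -> Rep b y -> Rep b' y.
Proof. by move=> hb [c [hy hc]]; exists c; split => // g; apply: le_trans (hc g) hb. Qed.

Lemma Rep_step x e : Rep beta x -> e \in G -> Rep beta (lam *: x + e).
Proof.
move=> [c [hx hc]] /indic [ce [he hce]].
exists (fun g => lh * c g + ce g); split.
  under eq_bigr do rewrite rmorphD rmorphM ilh scalerDl -scalerA.
  by rewrite big_split /= -scaler_sumr -hx -he.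
move=> g; rewrite sgD' sgM slh; apply: le_trans (ler_normD _ _) _.
rewrite -beta_eq normrM; apply: lerD; last exact: hce.
by apply: ler_wpM2l => //.
Qed.

Lemma Rep_comb y1 y0 e : Rep beta y1 -> Rep beta y0 -> e \in G ->
  Rep (beta + beta + 1) (y1 - y0 + e).
Proof.
move=> [c1 [h1 hc1]] [c0 [h0 hc0]] /indic [ce [he hce]].
exists (fun g => c1 g - c0 g + ce g); split.
  under eq_bigr do rewrite rmorphD rmorphB scalerDl scalerBl.
  by rewrite big_split sumrB /= -h1 -h0 -he.
move=> g; rewrite sgD' sgB; apply: le_trans (ler_normD _ _) _.
apply: lerD; last exact: hce.
apply: le_trans (ler_normB _ _) _; exact: lerD.
Qed.

Lemma memG_D e : e \in Dset -> e \in G.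
Proof. by rewrite /G mem_cat => ->. Qed.
Lemma memG_E e : e \in Eset -> e \in G.
Proof. by rewrite /G !mem_cat => ->; rewrite !orbT. Qed.
Lemma memG_F i x : x \in fs i -> x \in G.
Proof.
move=> h; rewrite /G !mem_cat; apply/orP; right; apply/orP; left.
by apply/flattenP; exists (fs i) => //; apply: map_f; rewrite mem_enum.
Qed.

Lemma Rep_all_N N : forall j y, T (tr (proto j) y) ->
  `|y| <= R0 + N%:R * lam^-1 -> Rep beta y.
Proof.
have lam0 : 0 < lam by apply: lt_trans lam1.
have lamm1 : 0 < lam - 1 by rewrite subr_gt0.
have base j y : T (tr (proto j) y) -> `|y| <= R0 -> Rep beta y.
  move=> Ty hy; apply: (@Rep_mono 1 beta y beta_ge1); apply: indic.
  exact: (@memG_F j y (hfs _ _ Ty hy)).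
elim: N => [|N IH] j y Ty hy.
  by apply: (base j) => //; move: hy; rewrite mul0r addr0.
have [hR|hR] := leP `|y| R0; first exact: (base j).
have [i [x [Tx [e he ey]]]] := @desub j y Ty.
rewrite ey; apply: (fun h => @Rep_step x e h (@memG_D e he)).
apply: (IH i) => //.
have hx : lam * `|x| <= `|y| + Cc.
  have -> : lam * `|x| = `|y - e|.
    by rewrite ey addrK normrZ gtr0_norm.
  apply: le_trans (ler_normB _ _) _; rewrite lerD2l; exact: le_sum_seq.
have hy2 : Cc + 1 < (lam - 1) * `|y|.
  by rewrite -ltr_pdivrMl // mulrC.
have : `|x| <= `|y| - lam^-1.
  rewrite -(ler_pM2l lam0) mulrBr mulfV ?gt_eqF //.
  apply: (le_trans hx); rewrite lerBrDr -addrA -lerBrDl.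
  by apply: ltW; move: hy2; rewrite mulrBl mul1r.
move=> h; apply: (le_trans h); rewrite lerBlDr -addrA; move: hy.
by rewrite -[N.+1]addn1 natrD mulrDl mul1r.
Qed.

Lemma Rep_all j y : T (tr (proto j) y) -> Rep beta y.
Proof.
move=> Ty.
have lam0 : 0 < lam by apply: lt_trans lam1.
have R00 : 0 <= R0.
  apply: divr_ge0; last by rewrite subr_ge0 ltW.
  by apply: addr_ge0 => //; apply: sumr_ge0.
have hN := archi_boundP (mulr_ge0 (normr_ge0 y) (ltW lam0)).
apply: (@Rep_all_N (Num.Def.archi_bound (`|y| * lam)) j) => //.
have h1 : `|y| <= (Num.Def.archi_bound (`|y| * lam))%:R * lam^-1.
  by apply: ltW; rewrite ltr_pdivlMr.
by apply: (le_trans h1); rewrite lerDr.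
Qed.

Lemma main_geo (P : set (tile R d L)) (t0 : tile R d L) (v : V) : P t0 ->
  (forall N : nat, legal T [set t | exists2 n : nat, (n <= N)%N & ptr P (n%:R *: v) t]) ->
  v = 0.
Proof.
move=> Pt0 hleg.
have H N : exists c : 'I_n -> K, N%:R *: v = \sum_g iota (c g) *: G`_g /\
    forall g, `|sg (c g)| <= beta + beta + 1.
  have [x hx] := hleg N.
  have T1 : T (tr (tr t0 (N%:R *: v)) x).
    by apply: hx; exists (tr t0 (N%:R *: v)) => //; exists N => //; exists t0.
  have T0 : T (tr (tr t0 (0%:R *: v)) x).
    by apply: hx; exists (tr t0 (0%:R *: v)) => //; exists 0%N => //; exists t0.
  have [j1 [y1 e1]] := Htr _ T1; have [j0 [y0 e0]] := Htr _ T0.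
  have e : tr (proto j0) (y0 + N%:R *: v) = tr (proto j1) y1.
    rewrite -trK -e0 -e1 !trK; congr tr.
    by rewrite scale0r add0r addrC.
  have := @dlP j0 j1 _ _ e => hd.
  have Ty1 : T (tr (proto j1) y1) by rewrite -e1.
  have Ty0 : T (tr (proto j0) y0) by rewrite -e0.
  have hE : dl j0 j1 \in G.
    apply: memG_E; apply: (allpairs_f (fun j l => dl j l)); by rewrite mem_enum.
  have [c [hc hb]] := @Rep_comb y1 y0 _ (@Rep_all j1 y1 Ty1) (@Rep_all j0 y0 Ty0) hE.
  exists c; split => //; rewrite -hc -hd.
  by rewrite addrC -addrA addKr addrAC subrr add0r.
have [c hc] := choice H.
apply: (@final R d K iota sg sgB sgM sg1 n (fun g => G`_g) c v (beta + beta + 1)).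
  by move=> N; case: (hc N).
by move=> N g; case: (hc N) => _; apply.
Qed.

End Geo3.

End PartE.
Import PartE.

Theorem theorem3p1 (R : realType) (d : nat) (L : finType) (m : nat)
  (proto : 'I_m -> tile R d L) (lam : R) (omega : 'I_m -> seq ('I_m * 'rV[R]_d))
  (T : set (tile R d L)) :
  substitution_rule proto lam omega ->
  primitive omega ->
  FLC proto lam omega ->
  pisot lam -> irrational lam ->
  is_tiling T ->
  (forall t, T t -> exists i (x : 'rV[R]_d), t = tr (proto i) x) ->
  omegaP proto lam omega T = T ->
  repetitive T ->
  forall P : set (tile R d L), finite_set P -> P !=set0 -> legal T P ->
  forall v : 'rV[R]_d, v != 0 ->
  exists n0 : nat,
    ~ legal T [set t | exists2 n : nat, (n <= n0)%N & ptr P (n%:R *: v) t].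
Proof.
move=> Hsub Hprim _ Hpis Hirr Htil Htr Hfix _ P _ [t0 Pt0] _ v nv.
apply: contrapT => H.
have hleg N : legal T [set t | exists2 n : nat, (n <= N)%N & ptr P (n%:R *: v) t].
  by apply: contrapT => hn; apply: H; exists N.
have [K [iota [sg [lh [mu [[sgB sgM sg1 ilh slh] mu1]]]]]] := @alg_setup R lam Hpis Hirr.
have lam1 : 1 < lam by case: Hpis.
have [fs hfs] := @fs_ex R d L m proto lam omega T Hsub Hprim Htil Htr.
have := @main_geo R d L m proto lam omega T Hsub Hprim Htil Htr Hfix lam1 K iota sg lh mu
  sgB sgM sg1 ilh slh mu1 fs hfs P t0 v Pt0 hleg.
by move/eqP; rewrite (negPf nv).
Qed.
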